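(* Let $d$ be a positive integer. For all integers $t\ge1$ and $k\in[0,d-1]$ there exist constants $C=C(t,k,d)$ and $T=T(t,k,d)$ such that every set $A\subseteq\mathbb{R}^d$ satisfying $P(A;T,k,d)$ has a subset $A_{(C)}\subseteq A$ with $|A_{(C)}|\le C$ satisfying $P(A_{(C)};t,k,d)$.
   Context: For $A\subseteq\mathbb{R}^d$, positive integer $t$ and integer $0\le k<d$, $P(A;t,k,d)$ denotes the property that $A$ is not contained in the union of any $t$ translates of a single $k$-dimensional linear subspace of $\mathbb{R}^d$. *)

(* Defs.v *)
(* R^d is 'rV[R]_d for R : realType; linear subspaces are
   row spaces of matrices (mxalgebra). *)
From mathcomp Require Import all_boot all_order all_algebra.
From mathcomp Require Import reals.
Set Implicit Arguments. Unset Strict Implicit. Unset Printing Implicit Defensive.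
Import GRing.Theory Num.Theory.
Local Open Scope ring_scope.

Definition in_translate (R : realType) (d k : nat) (V : 'M[R]_(k, d))
  (x y : 'rV[R]_d) : Prop := ((y - x) <= V)%MS.

Definition covered_by_translates (R : realType) (d t k : nat)
  (A : 'rV[R]_d -> Prop) : Prop :=
  exists V : 'M[R]_(k, d), \rank V = k /\
  exists x : 'I_t -> 'rV[R]_d,
    forall a, A a -> exists i : 'I_t, in_translate V (x i) a.

Definition propP (R : realType) (d t k : nat) (A : 'rV[R]_d -> Prop) : Prop :=
  ~ covered_by_translates t k A.

(* Main.v *)
Require Import Defs.
From mathcomp Require Import all_boot all_order all_algebra.
From mathcomp Require Import reals.
From Stdlib Require Import Classical.
Set Implicit Arguments. Unset Strict Implicit. Unset Printing Implicit Defensive.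
Import GRing.Theory Num.Theory.
Local Open Scope ring_scope.

Lemma subB_sub (R : realType) m d (U : 'M[R]_(m,d)) (a b : 'rV[R]_d) :
  (a <= U)%MS -> (b <= U)%MS -> (a - b <= U)%MS.
Proof. by move=> ha hb; apply: addmx_sub => //; rewrite eqmx_opp. Qed.

Lemma diff_sub (R : realType) m d (U : 'M[R]_(m,d)) (a b x : 'rV[R]_d) :
  (a - x <= U)%MS -> (b - x <= U)%MS -> (a - b <= U)%MS.
Proof.
move=> ha hb; have -> : a - b = (a - x) - (b - x) by rewrite opprB addrA subrK.
exact: subB_sub.
Qed.

Lemma opp_sub (R : realType) m d (U : 'M[R]_(m,d)) (a b : 'rV[R]_d) :
  (a - b <= U)%MS = (b - a <= U)%MS.
Proof. by rewrite -opprB eqmx_opp. Qed.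

Definition inequiv (R : realType) d (M : 'M[R]_d) (N : seq 'rV[R]_d) :=
  forall i i', (i < size N)%N -> (i' < size N)%N -> i != i' ->
    ~~ (N`_i - N`_i' <= M)%MS.

Lemma greedy (R : realType) d t (M : 'M[R]_d) (A : 'rV[R]_d -> Prop) :
  ~ (exists x : 'I_t -> 'rV[R]_d, forall a, A a -> exists i, (a - x i <= M)%MS) ->
  forall m, (m <= t.+1)%N -> exists N, size N = m /\ (forall a, a \in N -> A a)
     /\ inequiv M N.
Proof.
move=> Hn; elim=> [|m IH] Hm.
  by exists [::]; split=> //; split=> // i i'.
have [N [HN1 [HN2 HN3]]] := IH (ltnW Hm).
case: (classic (exists a, A a /\ forall i, (i < size N)%N -> ~~ (a - N`_i <= M)%MS)).
  move=> [a [Ha Hai]]; exists (a :: N); split; first by rewrite /= HN1.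
  split.
    by move=> b; rewrite in_cons => /orP [/eqP -> //|]; apply: HN2.
  move=> [|i] [|i'] //= Hi Hi' Hne.
  - by apply: Hai.
  - by rewrite opp_sub; apply: Hai.
  - by apply: HN3.
move=> Hno; exfalso; apply: Hn.
exists (fun i : 'I_t => N`_i) => a Ha.
apply: NNPP => Hc; apply: Hno; exists a; split=> // i Hi.
apply/negP => Hle; apply: Hc.
have Hit : (i < t)%N by rewrite -HN1 in Hm; exact: leq_trans Hi Hm.
by exists (Ordinal Hit).
Qed.

Definition Dmx (R : realType) d t (s : seq 'rV[R]_d) (c : {ffun 'I_(size s) -> 'I_t}) : 'M[R]_d :=
  (\sum_(p : 'I_(size s) * 'I_(size s) | c p.1 == c p.2) <<s`_p.1 - s`_p.2>>)%MS.

Lemma Dmx_sup (R : realType) d t (s : seq 'rV[R]_d) (c : {ffun 'I_(size s) -> 'I_t}) i i' :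
  c i = c i' -> (s`_i - s`_i' <= Dmx c)%MS.
Proof.
move=> E; apply: (sumsmx_sup (i, i')); first by rewrite /= E.
by rewrite genmxE.
Qed.

Lemma Dmx_sub (R : realType) d t m (s : seq 'rV[R]_d) (c : {ffun 'I_(size s) -> 'I_t}) (U : 'M[R]_(m,d)) :
  (forall i i', c i = c i' -> (s`_i - s`_i' <= U)%MS) -> (Dmx c <= U)%MS.
Proof.
move=> H; apply/sumsmx_subP => p /eqP E; rewrite genmxE; exact: H.
Qed.

Lemma Dmx_cover (R : realType) d t (s : seq 'rV[R]_d) (c : {ffun 'I_(size s) -> 'I_t}) :
  exists x : 'I_t -> 'rV[R]_d, forall a, a \in s -> exists i, (a - x i <= Dmx c)%MS.
Proof.
exists (fun j => if [pick i | c i == j] is Some i then s`_i else 0).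
move=> a /(nthP 0) [i Hi <-]; exists (c (Ordinal Hi)).
case: pickP => [i0 /eqP E|/(_ (Ordinal Hi))]; last by rewrite eqxx.
exact: (Dmx_sup (i := Ordinal Hi) (i' := i0)).
Qed.

Definition Qp (R : realType) d t k j (s : seq 'rV[R]_d) :=
  forall (U : 'M[R]_d) (x : 'I_t -> 'rV[R]_d),
  (exists W : 'M[R]_(k,d), \rank W = k /\ (U <= W)%MS) ->
  (forall a, a \in s -> exists i, (a - x i <= U)%MS) -> (j <= \rank U)%N.

Lemma flat_size (X : Type) (Y : Type) (F : X -> seq Y) (l : seq X) b :
  (forall x, size (F x) <= b)%N -> (size (flatten (map F l)) <= size l * b)%N.
Proof.
move=> H; elim: l => //= x l IH; rewrite size_cat mulSn leq_add //.
Qed.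

Lemma step (R : realType) d t k (A : 'rV[R]_d -> Prop) j (s : seq 'rV[R]_d) :
  propP t k A -> (forall a, a \in s -> A a) -> Qp t k j s ->
  exists s', (forall a, a \in s' -> A a) /\
    (size s' <= size s + t ^ (size s) * t.+1)%N /\ Qp t k j.+1 s'.
Proof.
move=> HP Hs HQ.
have HF : forall c : {ffun 'I_(size s) -> 'I_t}, exists N : seq 'rV[R]_d,
  (forall a, a \in N -> A a) /\ (size N <= t.+1)%N /\
  ((exists W : 'M[R]_(k,d), \rank W = k /\ (Dmx c <= W)%MS) ->
     size N = t.+1 /\ inequiv (Dmx c) N).
  move=> c; case: (classic (exists W : 'M[R]_(k,d), \rank W = k /\ (Dmx c <= W)%MS)).
    move=> [W [HW1 HW2]].
    have Hn : ~ (exists x : 'I_t -> 'rV[R]_d, forall a, A a -> exists i, (a - x i <= Dmx c)%MS).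
      move=> [x Hx]; apply: HP; exists W; split=> //; exists x => a /Hx [i Hi].
      by exists i; rewrite /in_translate; apply: submx_trans Hi HW2.
    have [N [HN1 [HN2 HN3]]] := greedy Hn (leqnn t.+1).
    by exists N; split=> //; split; [rewrite HN1|].
  by move=> Hno; exists [::]; split=> //.
have [F HFp] := fin_all_exists HF.
exists (s ++ flatten [seq F c | c : {ffun 'I_(size s) -> 'I_t}]).
split.
  move=> a; rewrite mem_cat => /orP [/Hs //|/flatten_mapP [c _ Hc]].
  by have [H1 _] := HFp c; apply: H1.
split.
  rewrite size_cat leq_add2l.
  apply: leq_trans (@flat_size _ _ F _ t.+1 (fun c => (HFp c).2.1)) _.
  by rewrite -cardT card_ffun !card_ord.
move=> U x HW Hcov.
have Hcs : forall i : 'I_(size s), exists j0 : 'I_t, (s`_i - x j0 <= U)%MS.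
  move=> i; apply: Hcov; by rewrite mem_cat mem_nth.
have [g Hg] := fin_all_exists Hcs.
pose c := [ffun i => g i].
have HDU : (Dmx c <= U)%MS.
  apply: Dmx_sub => i i'; rewrite !ffunE => E.
  by apply: (@diff_sub _ _ _ _ _ _ (x (g i))); [apply: Hg| rewrite E; apply: Hg].
have [x' Hx'] := Dmx_cover c.
have Hj : (j <= \rank (Dmx c))%N.
  apply: (HQ _ x') => //.
  by case: HW => W [HW1 HW2]; exists W; split=> //; apply: submx_trans HDU HW2.
rewrite ltnNge; apply/negP => HU.
have HUD : (U <= Dmx c)%MS.
  have := mxrank_leqif_sup HDU; case=> _ <-.
  by rewrite eqn_leq mxrankS //= (leq_trans HU Hj).
have Hgood : exists W : 'M[R]_(k,d), \rank W = k /\ (Dmx c <= W)%MS.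
  by case: HW => W [HW1 HW2]; exists W; split=> //; apply: submx_trans HDU HW2.
have [_ [_ /(_ Hgood) [HN1 HN2]]] := HFp c.
have Hcn : forall i : 'I_t.+1, exists j0 : 'I_t, ((F c)`_i - x j0 <= U)%MS.
  move=> i; apply: Hcov; rewrite mem_cat; apply/orP; right.
  apply/flatten_mapP; exists c; first by rewrite mem_enum.
  by apply: mem_nth; rewrite HN1.
have [h Hh] := fin_all_exists Hcn.
have Hinj : injective h.
  move=> i i' E; apply/eqP; apply/negPn/negP => Hne.
  have := HN2 i i'; rewrite HN1 => /(_ (ltn_ord i) (ltn_ord i') Hne) /negP; apply.
  apply: submx_trans HUD.
  by apply: (@diff_sub _ _ _ _ _ _ (x (h i))); [apply: Hh| rewrite E; apply: Hh].
by have := leq_card h Hinj; rewrite !card_ord ltnn.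
Qed.

Fixpoint Cs (t j : nat) : nat :=
  if j is j'.+1 then (Cs t j' + t ^ (Cs t j') * t.+1)%N else 0%N.

Lemma ind (R : realType) d t k (A : 'rV[R]_d -> Prop) :
  (1 <= t)%N -> propP t k A -> forall j, exists s : seq 'rV[R]_d,
  (forall a, a \in s -> A a) /\ (size s <= Cs t j)%N /\ Qp t k j s.
Proof.
move=> Ht HP; elim=> [|j [s [H1 [H2 H3]]]].
  by exists [::]; split=> //; split=> // U x.
have [s' [H1' [H2' H3']]] := step HP H1 H3.
exists s'; split=> //; split=> //=.
apply: leq_trans H2' _; apply: leq_add => //; apply: leq_mul => //.
by rewrite leq_pexp2l.
Qed.

Theorem lemma4p2 (R : realType) (d : nat) (hd : (0 < d)%N) :
  forall t k : nat, (1 <= t)%N -> (k < d)%N ->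
  exists C T : nat, (1 <= T)%N /\
    forall A : 'rV[R]_d -> Prop,
      propP T k A ->
      exists s : seq 'rV[R]_d,
        (forall a, a \in s -> A a) /\ (size s <= C)%N /\
        propP t k (fun a => a \in s).
Proof.
move=> t k Ht Hk; exists (Cs t k.+1), t; split=> // A HA.
have [s [H1 [H2 H3]]] := ind Ht HA k.+1.
exists s; split=> //; split=> //.
move=> [V [HV [x Hx]]].
suff: (k.+1 <= \rank <<V>>%MS)%N by rewrite mxrank_gen HV ltnn.
apply: (H3 _ x).
  by exists V; split=> //; rewrite genmxE.
by move=> a /Hx [i Hi]; exists i; rewrite genmxE.
Qed.
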